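(* Let $\mathcal A$ be a finite alphabet and $\Psi: \mathcal A^*\to \mathcal A^*$. Then $\Psi$ is a symmetry if and only if $\Psi$ is a morphism or an antimorphism whose restriction to $\mathcal A$ is a permutation of the letters of $\mathcal A$.
   Context: A symmetry on $\mathcal A^*$ is a map $\Psi:\mathcal A^*\to\mathcal A^*$ such that (1) $\Psi$ is a bijection and (2) for all $w,v\in\mathcal A^*$, the number of occurrences of $w$ in $v$ equals the number of occurrences of $\Psi(w)$ in $\Psi(v)$ (an occurrence of $w$ in $v=v_1\cdots v_m$ is an index $i$ such that $w$ is a prefix of $v_iv_{i+1}\cdots v_m$). $\Psi$ is a morphism if $\Psi(vw)=\Psi(v)\Psi(w)$ and an antimorphism if $\Psi(vw)=\Psi(w)\Psi(v)$ for all $v,w\in\mathcal A^*$. *)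

(* Defs.v *)
From mathcomp Require Import all_boot.
Set Implicit Arguments. Unset Strict Implicit. Unset Printing Implicit Defensive.

(* Number of occurrences of w in v = v_1...v_m: the number of indices
   i in {1..m} such that w is a prefix of v_i ... v_m.  (0-based: i < size v,
   w prefix of drop i v.) *)
Definition occ (A : eqType) (w v : seq A) : nat :=
  count (fun i => prefix w (drop i v)) (iota 0 (size v)).

Definition symmetry (A : eqType) (Psi : seq A -> seq A) : Prop :=
  bijective Psi /\ forall w v : seq A, occ w v = occ (Psi w) (Psi v).

Definition morphism (A : eqType) (Psi : seq A -> seq A) : Prop :=
  forall v w : seq A, Psi (v ++ w) = Psi v ++ Psi w.

Definition antimorphism (A : eqType) (Psi : seq A -> seq A) : Prop :=
  forall v w : seq A, Psi (v ++ w) = Psi w ++ Psi v.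

Definition letter_perm (A : eqType) (Psi : seq A -> seq A) : Prop :=
  exists f : A -> A, bijective f /\ forall a : A, Psi [:: a] = [:: f a].

(* Main.v *)
Require Import Defs.
From mathcomp Require Import all_boot zify.
Set Implicit Arguments. Unset Strict Implicit. Unset Printing Implicit Defensive.

Lemma iotaSr N : iota 0 N.+1 = rcons (iota 0 N) N.
Proof. by rewrite -addn1 iotaD /= cats1. Qed.

Lemma iotaSl N : iota 0 N.+1 = 0 :: map succn (iota 0 N).
Proof. by rewrite /= -(iotaDl 1 0). Qed.

Lemma rev_iota n : rev (iota 0 n) = map (fun i => n.-1 - i) (iota 0 n).
Proof.
elim: n => [//|n IH].
rewrite {1}iotaSr rev_rcons IH iotaSl /= subn0 -map_comp; congr (_ :: _).
by apply: eq_map => i /=; lia.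
Qed.

Lemma revcount n (P : pred nat) :
  count P (iota 0 n) = count (fun i => P (n.-1 - i)) (iota 0 n).
Proof. by rewrite -count_rev rev_iota count_map. Qed.

Lemma countA k (P : pred nat) N :
  count (fun j => (k <= j) && P (j - k)) (iota 0 N) = count P (iota 0 (N - k)).
Proof.
elim: N => [|N IH]; first by rewrite sub0n.
rewrite iotaSr -cats1 count_cat IH /=.
case: (leqP k N) => h.
  by rewrite subSn // iotaSr -cats1 count_cat /= addn0.
have -> : N.+1 - k = N - k by lia.
by rewrite !addn0.
Qed.

Lemma countB (P : pred nat) m N : (forall i, m <= i -> ~~ P i) -> m <= N ->
  count P (iota 0 N) = count P (iota 0 m).
Proof.
move=> hP hm; rewrite -(subnKC hm) iotaD count_cat add0n -[RHS]addn0; congr (_ + _).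
rewrite (eq_in_count (a2:=pred0)) ?count_pred0 //.
by move=> i; rewrite mem_iota => /andP[h _]; apply/negbTE/hP.
Qed.

Section Occ.
Variable A : eqType.
Implicit Types w v : seq A.

Lemma occ_nil v : occ [::] v = size v.
Proof.
rewrite /occ (eq_count (a2:=predT)); first by rewrite count_predT size_iota.
by move=> i; rewrite /= prefixE take0.
Qed.

Lemma occE' w v : w != [::] ->
  occ w v = count (fun i => prefix w (drop i v)) (iota 0 (size v).+1).
Proof.
move=> nw; rewrite /occ iotaSr -cats1 count_cat /= drop_size prefixs0.
by rewrite (negbTE nw) !addn0.
Qed.

Lemma suffix_take w v j : j <= size v ->
  suffix w (take j v) = (size w <= j) && prefix w (drop (j - size w) v).
Proof.
move=> hj; rewrite suffixE size_takel //.
case: leqP => h /=.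
  by rewrite prefixE take_drop subnKC.
apply/negbTE/eqP => e; have := congr1 size e; rewrite size_drop size_takel //.
lia.
Qed.

Lemma occ_rev w v : occ (rev w) (rev v) = occ w v.
Proof.
have [->|nw] := eqVneq w [::]; first by rewrite !occ_nil size_rev.
have nrw : rev w != [::] by rewrite -size_eq0 size_rev size_eq0.
rewrite !occE' // size_rev revcount.
rewrite (eq_in_count (a2:= fun j => (size w <= j) && prefix w (drop (j - size w) v))); last first.
  move=> i; rewrite mem_iota /= => hi.
  rewrite drop_rev -suffix_take; last by lia.
  by rewrite /suffix; congr (prefix _ (rev (take _ _))); lia.
rewrite (countA (size w) (fun i => prefix w (drop i v))) (countB (m := (size v).+1 - size w)) //; last by lia.
have hw : 0 < size w by rewrite lt0n size_eq0.
move=> i hi; apply/negP => /size_prefix; rewrite size_drop; lia.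
Qed.

Lemma prefix_map (B : eqType) (f : A -> B) w v : injective f ->
  prefix (map f w) (map f v) = prefix w v.
Proof.
by move=> fi; rewrite !prefixE size_map -map_take (inj_eq (inj_map fi)).
Qed.

Lemma occ_map (B : eqType) (f : A -> B) w v : injective f ->
  occ (map f w) (map f v) = occ w v.
Proof.
move=> fi; rewrite /occ size_map; apply: eq_count => i /=.
by rewrite -map_drop prefix_map.
Qed.
End Occ.

Lemma four (T : Type) (a b c d : T) : (a = c \/ a = d) -> (b = c \/ b = d) ->
  (c = a \/ c = b) -> (d = a \/ d = b) -> (c = a /\ d = b) \/ (c = b /\ d = a).
Proof. by move=> [] ? [] ? [] ? [] ?; subst; auto. Qed.

Section Words.
Variable A : eqType.
Implicit Types w v s t u x : seq A.

Lemma occ_nil_r w : occ w [::] = 0.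
Proof. by []. Qed.

Lemma occ_self v : v != [::] -> 0 < occ v v.
Proof.
by case: v => [//|a s] _; rewrite /occ /= eqxx prefix_refl.
Qed.

Lemma occK w s : size w + 1 = size s ->
  (0 < occ w s) = (w == take (size w) s) || (w == drop 1 s).
Proof.
move=> hs; rewrite /occ -has_count; apply/hasP/orP.
  move=> [i]; rewrite mem_iota add0n => /andP[_ hi] hp.
  have := size_prefix hp; rewrite size_drop => hle.
  have : (i == 0) || (i == 1) by lia.
  case/orP => /eqP ei; subst i.
    by left; move: hp; rewrite drop0 prefixE eq_sym.
  right; move: hp; rewrite prefixE take_oversize 1?eq_sym //; rewrite size_drop; lia.
case=> /eqP e.
  exists 0; first by rewrite mem_iota; lia.
  by rewrite drop0 e prefix_take.
case: (posnP (size w)) => hw.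
  exists 0; first by rewrite mem_iota; lia.
  by move/eqP: hw; rewrite size_eq0 => /eqP ->; rewrite prefixE take0.
exists 1; first by rewrite mem_iota; lia.
by rewrite e prefix_refl.
Qed.

Lemma occ3 t s : size t + 2 = size s -> 0 < size t ->
  occ t s = prefix t s + prefix t (drop 1 s) + prefix t (drop 2 s).
Proof.
move=> hs ht; rewrite /occ -hs.
have [m hm] : exists m, size t = m.+1 by exists (size t).-1; lia.
rewrite hm addn2 /= drop0 !addnA -[RHS]addn0; congr (_ + _).
rewrite (eq_in_count (a2:=pred0)) ?count_pred0 //.
move=> i; rewrite mem_iota => /andP[h1 _] /=.
apply/negbTE/negP => /size_prefix; rewrite size_drop -hs; lia.
Qed.

Lemma straight u x n : size u = n -> size x = n -> 2 <= n ->
  take n.-1 u = take n.-1 x -> drop 1 u = drop 1 x -> u = x.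
Proof.
case: u => [|a u]; case: x => [|b x] //=; try (move=> *; lia).
move=> <- _ hn e; rewrite !drop0 => ex; subst x.
case: u hn e => [|c u] /= hn; first lia.
by case=> ->.
Qed.

Lemma cross u x n : size u = n -> size x = n -> 3 <= n ->
  take n.-1 u = drop 1 x -> drop 1 u = take n.-1 x ->
  (forall t, size t = n - 2 -> occ t u = occ t x) -> u = x.
Proof.
move=> su sx hn h1 h2 ho.
have a : A.
  have : 0 < size x by lia.
  by case: (x) => [|b ?].
have U1 i : i < n.-1 -> nth a u i = nth a x i.+1.
  by move=> hi; rewrite -(nth_take a hi) h1 nth_drop.
have U2 i : i < n.-1 -> nth a u i.+1 = nth a x i.
  by move=> hi; rewrite -(nth_take a hi) -h2 nth_drop.
have P i : i < n - 2 -> nth a x i.+2 = nth a x i.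
  by move=> hi; rewrite -U1; [apply: U2|]; lia.
have C : (forall i, i < n - 2 -> nth a x i.+1 = nth a x i) -> u = x.
  move=> hc.
  have xc i : i < n -> nth a x i = nth a x 0.
    have xc1 j : j <= n - 2 -> nth a x j = nth a x 0.
      elim: j => [//|j IH] hj.
      by rewrite hc; [apply: IH|]; lia.
    move=> hi; case: (leqP i (n - 2)) => h; first exact: xc1.
    have -> : i = (n - 3).+2 by lia.
    rewrite P; last lia.
    by apply: xc1; lia.
  apply: (eq_from_nth (x0:=a)); first by rewrite su sx.
  move=> i; rewrite su => hi.
  case: (ltnP i n.-1) => h; first by rewrite U1 // !xc //; lia.
  have -> : i = (n - 2).+1 by lia.
  rewrite U2; last lia.
  by rewrite !xc //; lia.
case: (eqVneq u x) => [//|nux]; exfalso.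
set t := take (n - 2) x.
have st : size t = n - 2 by rewrite size_takel // sx; lia.
have := ho t st.
rewrite !occ3 ?st ?su ?sx; try lia.
have -> : prefix t x by apply: prefix_take.
have -> : prefix t (drop 2 x).
  rewrite prefixE st take_oversize; last by rewrite size_drop sx; lia.
  apply/eqP; apply: (eq_from_nth (x0:=a)); first by rewrite size_drop st sx.
  move=> i; rewrite size_drop sx => hi.
  by rewrite nth_drop nth_take; [apply: P|]; lia.
have -> : prefix t u = false.
  apply/negP; rewrite prefixE st => /eqP e.
  apply: (negP nux); apply/eqP; apply: C => i hi.
  have := congr1 (fun s => nth a s i) e; rewrite /t !nth_take // => E.
  by rewrite -U1 //; lia.
have -> : prefix t (drop 2 u) = false.
  apply/negP; rewrite prefixE st take_oversize; last by rewrite size_drop su; lia.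
  move=> /eqP e; apply: (negP nux); apply/eqP; apply: C => i hi.
  have := congr1 (fun s => nth a s i) e; rewrite nth_drop nth_take // => <-.
  by rewrite -U2 //; lia.
case: (prefix t (drop 1 u)); case: (prefix t (drop 1 x)) => /=; lia.
Qed.
End Words.

Section Main.
Variable A : finType.
Variable Psi : seq A -> seq A.
Hypothesis Pb : bijective Psi.
Hypothesis Po : forall w v : seq A, occ w v = occ (Psi w) (Psi v).

Lemma Psi_nil : Psi [::] = [::].
Proof.
case: Pb => Q PQ QP.
have H u : occ u (Psi [::]) = 0 by rewrite -{1}(QP u) -Po.
apply/eqP; apply: contraT => ne.
by have := occ_self ne; rewrite H.
Qed.

Lemma size_Psi v : size (Psi v) = size v.
Proof. by rewrite -occ_nil -Psi_nil -Po occ_nil. Qed.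

Definition fl (a : A) := nth a (Psi [:: a]) 0.

Lemma Psi_letter a : Psi [:: a] = [:: fl a].
Proof.
rewrite /fl; have := size_Psi [:: a].
by case: (Psi [:: a]) => [|b [|c s]].
Qed.

Lemma fl_inj : injective fl.
Proof.
move=> a b e; have : Psi [:: a] = Psi [:: b] by rewrite !Psi_letter e.
by move/(bij_inj Pb) => [].
Qed.

Lemma FL v : 2 <= size v ->
  (take (size v).-1 (Psi v) = Psi (take (size v).-1 v) /\
     drop 1 (Psi v) = Psi (drop 1 v)) \/
  (take (size v).-1 (Psi v) = Psi (drop 1 v) /\
     drop 1 (Psi v) = Psi (take (size v).-1 v)).
Proof.
move=> hv; case: Pb => Q PQ QP.
set m := (size v).-1; set u := Psi v.
have su : size u = size v by rewrite size_Psi.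
have Kv w : size w = m -> (0 < occ w v) = (w == take m v) || (w == drop 1 v).
  by move=> sw; rewrite occK sw // /m addn1 prednK //; lia.
have Ku w : size w = m -> (0 < occ w u) = (w == take m u) || (w == drop 1 u).
  by move=> sw; rewrite occK sw // su /m addn1 prednK //; lia.
have stv : size (take m v) = m by rewrite size_takel // /m; lia.
have sdv : size (drop 1 v) = m by rewrite size_drop /m; lia.
have stu : size (take m u) = m by rewrite size_takel // su /m; lia.
have sdu : size (drop 1 u) = m by rewrite size_drop su /m; lia.
have F1 w : size w = m -> 0 < occ w v -> Psi w = take m u \/ Psi w = drop 1 u.
  move=> sw hw; have : 0 < occ (Psi w) u by rewrite -Po.
  by rewrite Ku ?size_Psi // => /orP[/eqP|/eqP]; auto.
have F2 w : size w = m -> 0 < occ w u -> w = Psi (take m v) \/ w = Psi (drop 1 v).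
  move=> sw hw.
  have sQ : size (Q w) = m by rewrite -size_Psi QP.
  have : 0 < occ (Q w) v by rewrite Po QP.
  by rewrite Kv // => /orP[/eqP e|/eqP e]; [left|right]; rewrite -e QP.
apply: four.
- by apply: F1 => //; rewrite Kv // eqxx.
- by apply: F1 => //; rewrite Kv // eqxx orbT.
- by apply: F2 => //; rewrite Ku // eqxx.
- by apply: F2 => //; rewrite Ku // eqxx orbT.
Qed.

Lemma TL a b : Psi [:: a; b] = [:: fl a; fl b] \/ Psi [:: a; b] = [:: fl b; fl a].
Proof.
have := FL (v := [:: a; b]) isT; rewrite /= ?drop0 !Psi_letter.
have := size_Psi [:: a; b].
case: (Psi [:: a; b]) => [|p [|q [|r s]]] //= _.
by case=> [[[->] [->]]|[[->] [->]]]; auto.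
Qed.

Lemma TL3 x y z : x != y -> y != z -> Psi [:: x; y] = [:: fl y; fl x] ->
  Psi [:: y; z] = [:: fl z; fl y].
Proof.
move=> nxy nyz hxy.
case: (TL y z) => [hyz|//].
have := FL (v := [:: x; y; z]) isT; rewrite /= ?drop0 hxy hyz.
have := size_Psi [:: x; y; z].
case: (Psi [:: x; y; z]) => [|p [|q [|r [|r' s]]]] //= _.
case=> [[[_ ->] [e _]]|[[_ ->] [e _]]].
  by move/fl_inj: e => e; rewrite e eqxx in nxy.
by move/fl_inj: e => e; rewrite e eqxx in nyz.
Qed.

Section Generic.
Variable phi : seq A -> seq A.
Hypothesis ph0 : phi [::] = [::].
Hypothesis ph1 : forall a, phi [:: a] = [:: fl a].
Hypothesis ph2 : forall a b, Psi [:: a; b] = phi [:: a; b].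
Hypothesis phO : forall w v, occ (phi w) (phi v) = occ w v.
Hypothesis phS : forall t, exists w, size w = size t /\ phi w = t.
Hypothesis phD : forall v u, size u = size v -> 3 <= size v ->
  ((take (size v).-1 u = phi (take (size v).-1 v) /\ drop 1 u = phi (drop 1 v)) \/
   (take (size v).-1 u = phi (drop 1 v) /\ drop 1 u = phi (take (size v).-1 v))) ->
  (forall t, size t = size v - 2 -> occ t u = occ t (phi v)) -> u = phi v.

Lemma Psi_phi v : Psi v = phi v.
Proof.
have [n] := ubnP (size v); elim: n v => // n IH v hv.
case: (ltnP (size v) 3) => hs.
  case: v hs {hv} => [|a [|b [|c v]]] //= _.
  - by rewrite Psi_nil ph0.
  - by rewrite Psi_letter ph1.
apply: phD; first exact: size_Psi.
- exact: hs.
- have hs2 : 2 <= size v by lia.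
  have IHt : Psi (take (size v).-1 v) = phi (take (size v).-1 v).
    by apply: IH; rewrite size_takel; lia.
  have IHd : Psi (drop 1 v) = phi (drop 1 v).
    by apply: IH; rewrite size_drop; lia.
  by rewrite -IHt -IHd; apply: FL.
- move=> t st; have [w [sw <-]] := phS t.
  rewrite -{1}(IH w); last first.
    by rewrite sw st; lia.
  by rewrite -Po phO.
Qed.
End Generic.

End Main.

Definition hrev (A : Type) (f : A -> A) (v : seq A) := rev (map f v).

Section Inst.
Variable A : finType.
Variable f : A -> A.
Hypothesis fi : injective f.
Implicit Types v u : seq A.

Lemma phD_g v u : size u = size v -> 3 <= size v ->
  ((take (size v).-1 u = map f (take (size v).-1 v) /\ drop 1 u = map f (drop 1 v)) \/
   (take (size v).-1 u = map f (drop 1 v) /\ drop 1 u = map f (take (size v).-1 v))) ->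
  (forall t, size t = size v - 2 -> occ t u = occ t (map f v)) -> u = map f v.
Proof.
move=> su hs; rewrite map_take map_drop => H ho.
have sx : size (map f v) = size v by rewrite size_map.
case: H => [[h1 h2]|[h1 h2]].
  by apply: (straight (n := size v)) => //; lia.
by apply: (cross (n := size v)).
Qed.

Lemma hT v : 1 <= size v -> hrev f (take (size v).-1 v) = drop 1 (hrev f v).
Proof. by move=> hv; rewrite /hrev drop_rev size_map map_take subn1. Qed.

Lemma hD v : 1 <= size v -> hrev f (drop 1 v) = take (size v).-1 (hrev f v).
Proof.
move=> hv; rewrite /hrev take_rev size_map map_drop.
by congr (rev (drop _ _)); lia.
Qed.

Lemma phD_h v u : size u = size v -> 3 <= size v ->
  ((take (size v).-1 u = hrev f (take (size v).-1 v) /\ drop 1 u = hrev f (drop 1 v)) \/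
   (take (size v).-1 u = hrev f (drop 1 v) /\ drop 1 u = hrev f (take (size v).-1 v))) ->
  (forall t, size t = size v - 2 -> occ t u = occ t (hrev f v)) -> u = hrev f v.
Proof.
move=> su hs; rewrite hT ?hD; try lia.
move=> H ho.
have sx : size (hrev f v) = size v by rewrite size_rev size_map.
case: H => [[h1 h2]|[h1 h2]].
  by apply: (cross (n := size v)).
by apply: (straight (n := size v)) => //; lia.
Qed.

Lemma occ_hrev w v : occ (hrev f w) (hrev f v) = occ w v.
Proof. by rewrite /hrev occ_rev occ_map. Qed.

End Inst.

Theorem theorem13 (A : finType) (Psi : seq A -> seq A) :
  symmetry Psi <->
  ((morphism Psi \/ antimorphism Psi) /\ letter_perm Psi).
Proof.
split.
  case=> Pb Po.
  have fi := fl_inj Pb Po.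
  have fb := injF_bij fi.
  case: (fb) => f' c1 c2.
  split; last by exists (fl Psi); split => // a; apply: Psi_letter.
  case: (boolP [forall a, [forall b, Psi [:: a; b] == [:: fl Psi a; fl Psi b]]]) => H.
    left.
    have E v : Psi v = map (fl Psi) v.
      apply: (Psi_phi Pb Po) => //.
      - by move=> a b; move/forallP: H => /(_ a) /forallP /(_ b) /eqP.
      - by move=> w u; apply: occ_map.
      - by move=> t; exists (map f' t); rewrite size_map (mapK c2).
      - exact: phD_g.
    by move=> v w; rewrite !E map_cat.
  right.
  move/forallPn: H => [a /forallPn [b /eqP hab]].
  have hab' : Psi [:: a; b] = [:: fl Psi b; fl Psi a] by case: (TL Pb Po a b).
  have nab : a != b by apply/eqP => e; subst b.
  have E v : Psi v = hrev (fl Psi) v.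
    apply: (Psi_phi Pb Po) => //.
    - move=> c d; rewrite /hrev /rev /=.
      case: (eqVneq c d) => [<-|ncd].
        by case: (TL Pb Po c c).
      have hb z : b != z -> Psi [:: b; z] = [:: fl Psi z; fl Psi b].
        by move=> nbz; apply: (TL3 Pb Po nab nbz hab').
      case: (eqVneq b c) => [ebc|nbc]; first by subst c; exact: hb ncd.
      exact: (TL3 Pb Po nbc ncd (hb c nbc)).
    - by move=> w u; apply: occ_hrev.
    - move=> t; exists (map f' (rev t)).
      by rewrite size_map size_rev /hrev (mapK c2) revK.
    - exact: phD_h.
  by move=> v w; rewrite !E /hrev map_cat rev_cat.
case=> [[Hm|Ha] [f [fb Hf]]]; have fi := bij_inj fb; case: (fb) => f' c1 c2.
  have P0 : Psi [::] = [::].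
    have := congr1 size (Hm [::] [::]); rewrite size_cat.
    by case: (Psi [::]) => //= x s; lia.
  have E v : Psi v = map f v.
    elim: v => [//|a v IH].
    by rewrite -cat1s Hm IH Hf.
  split.
    apply: (eq_bij (f := map f)) => [|v]; last by rewrite E.
    by exists (map f'); apply: mapK.
  by move=> w v; rewrite !E occ_map.
have P0 : Psi [::] = [::].
  have := congr1 size (Ha [::] [::]); rewrite size_cat.
  by case: (Psi [::]) => //= x s; lia.
have E v : Psi v = hrev f v.
  elim: v => [//|a v IH].
  by rewrite -cat1s Ha IH Hf /hrev /= rev_cons cats1.
split.
  apply: (eq_bij (f := hrev f)) => [|v]; last by rewrite E.
  exists (fun u => map f' (rev u)) => u; rewrite /hrev.
    by rewrite revK (mapK c1).
  by rewrite (mapK c2) revK.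
by move=> w v; rewrite !E occ_hrev.
Qed.
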